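(* Let $G$ be a unimodular surface-like pseudolattice with point-like element $\mathsf p$ and Serre operator $S$, and let $f\in G$ be an element of rank zero with $\chi(f,f)=1$ (i.e. of self-intersection $-1$). Let $G_f={}^\perp f=\{v\in G\mid \chi(v,f)=0\}$ with the restricted pairing. Then $z:=(S-1)(f)$ lies in $\mathbb{Z}\mathsf p\subseteq G_f$, and the numerical blow-up $\operatorname{Bl}_z G_f=\mathbb{Z}g\oplus G_f$ is isometric to $G$ via the map sending $g\mapsto f$ and $v\mapsto v$ for $v\in G_f$.
   Context: A pseudolattice is a finitely generated free abelian group with a non-degenerate bilinear form $\chi$; unimodular means $\chi$ induces $G\cong\operatorname{Hom}(G,\mathbb{Z})$. Surface-like: there is a primitive $\mathsf p$ with $\chi(\mathsf p,\mathsf p)=0$, $\chi(\mathsf p,v)=\chi(v,\mathsf p)$ for all $v$, and $\chi$ symmetric on $\mathsf p^\perp$; rank $\mathsf r(v)=\chi(\mathsf p,v)$. A Serre operator is an isometry $S$ with $\chi(v,w)=\chi(w,S(v))$ for all $v,w$ (it exists and is unique for unimodular $G$). For $z\in\mathbb{Z}\mathsf p$, the numerical blow-up of a unimodular surface-like pseudolattice $H$ at $z$ is $\operatorname{Bl}_zH=\mathbb{Z}g\oplus H$ with pairing extending $\chi$ on $H$ by $\chi(g,g)=1$, $\chi(h,g)=0$ and $\chi(g,h)=\chi(z,h)$ for all $h\in H$. *)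

(* Defs.v *)
(* A pseudolattice of rank n is modelled as Z^n = 'rV[int]_n
   with the bilinear form given by a Gram matrix M : 'M[int]_n. *)
From HB Require Import structures.
From mathcomp Require Import all_boot all_algebra.
Set Implicit Arguments. Unset Strict Implicit. Unset Printing Implicit Defensive.
Import GRing.Theory Num.Theory.
Local Open Scope ring_scope.

Definition chi (n : nat) (M : 'M[int]_n) (v w : 'rV[int]_n) : int :=
  (v *m M *m w^T) 0 0.

Definition pl_nondegenerate (n : nat) (M : 'M[int]_n) : Prop := \det M != 0.

(* pl_unimodular: v |-> chi(v, -) is an isomorphism G -> Hom(G, Z),
   i.e. the Gram matrix is invertible over Z *)
Definition pl_unimodular (n : nat) (M : 'M[int]_n) : Prop :=
  M \in unitmx.

Definition pl_primitive (n : nat) (p : 'rV[int]_n) : Prop :=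
  forall (k : int) (w : 'rV[int]_n), p = k *: w -> k = 1 \/ k = -1.

Definition pl_surface_like (n : nat) (M : 'M[int]_n) (p : 'rV[int]_n) : Prop :=
  [/\ pl_primitive p,
      chi M p p = 0,
      (forall v, chi M p v = chi M v p) &
      (forall v w, chi M p v = 0 -> chi M p w = 0 -> chi M v w = chi M w v)].

Definition rk (n : nat) (M : 'M[int]_n) (p v : 'rV[int]_n) : int := chi M p v.

Definition pl_serre_operator (n : nat) (M : 'M[int]_n) (S : 'rV[int]_n -> 'rV[int]_n) : Prop :=
  [/\ {morph S : x y / x + y},
      bijective S,
      (forall v w, chi M (S v) (S w) = chi M v w) &
      (forall v w, chi M v w = chi M w (S v))].

(* Pairing on the numerical blow-up Bl_z H = Z g (+) H, H a sub-pseudolattice of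
   Z^n with the restricted form, an element a g + v written as (a, v):
   chi(a g + v, b g + w) = a b chi(g,g) + a chi(g,w) + b chi(v,g) + chi(v,w)
                          = a b + a chi(z,w) + chi(v,w). *)
Definition bl_chi (n : nat) (M : 'M[int]_n) (z : 'rV[int]_n)
  (x y : int * 'rV[int]_n) : int :=
  x.1 * y.1 + x.1 * chi M z y.2 + chi M x.2 y.2.

(* Main.v *)
Require Import Defs.
From HB Require Import structures.
From mathcomp Require Import all_boot all_algebra.
From Stdlib Require Import Classical.
Import GRing.Theory Num.Theory.
Local Open Scope ring_scope.

Section Chi.
Variables (n : nat) (M : 'M[int]_n).
Implicit Types u v w x : 'rV[int]_n.

Lemma chiDl u v w : chi M (u + v) w = chi M u w + chi M v w.
Proof. by rewrite /chi !mulmxDl mxE. Qed.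
Lemma chiDr u v w : chi M w (u + v) = chi M w u + chi M w v.
Proof. by rewrite /chi linearD /= mulmxDr mxE. Qed.
Lemma chiZl (k : int) v w : chi M (k *: v) w = k * chi M v w.
Proof. by rewrite /chi -!scalemxAl mxE. Qed.
Lemma chiZr (k : int) v w : chi M w (k *: v) = k * chi M w v.
Proof. by rewrite /chi linearZ /= -scalemxAr mxE. Qed.
Lemma chiNl v w : chi M (- v) w = - chi M v w.
Proof. by rewrite -scaleN1r chiZl mulN1r. Qed.
Lemma chiNr v w : chi M w (- v) = - chi M w v.
Proof. by rewrite -scaleN1r chiZr mulN1r. Qed.
Lemma chiBl u v w : chi M (u - v) w = chi M u w - chi M v w.
Proof. by rewrite chiDl chiNl. Qed.
Lemma chiBr u v w : chi M w (u - v) = chi M w u - chi M w v.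
Proof. by rewrite chiDr chiNr. Qed.

Lemma chi_e i x : chi M (delta_mx 0 i) x = (M *m x^T) i 0.
Proof. by rewrite /chi -mulmxA -rowE mxE. Qed.

Lemma chi_nondeg x : M \in unitmx -> (forall v, chi M v x = 0) -> x = 0.
Proof.
move=> uM H.
have c0 : M *m x^T = 0.
  by apply/matrixP=> i j; rewrite ord1 -chi_e H mxE.
apply: trmx_inj; by rewrite -(mulKmx uM x^T) c0 mulmx0 trmx0.
Qed.
End Chi.
Lemma exists_one (n : nat) (M : 'M[int]_n) (p : 'rV[int]_n) :
  M \in unitmx -> pl_primitive p -> exists v0, chi M v0 p = 1.
Proof.
move=> uM pp.
have key : forall m : nat, forall v, chi M v p = m%:Z -> (0 < m)%N ->
    exists v0, chi M v0 p = 1.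
  elim/ltn_ind=> m IH v Hv m0.
  case: (classic (exists i : 'I_n, (chi M (delta_mx ord0 i) p %% m%:Z)%Z != 0)).
    move=> [i Hi].
    set q := (chi M (delta_mx ord0 i) p %/ m%:Z)%Z.
    have Hw : chi M (delta_mx ord0 i - q *: v) p = (chi M (delta_mx ord0 i) p %% m%:Z)%Z.
      rewrite chiBl chiZl Hv {1}(divz_eq (chi M (delta_mx ord0 i) p) m%:Z) -/q.
      by rewrite addrAC subrr add0r.
    have mz : (m%:Z != 0) by rewrite eqz_nat -lt0n.
    have ge0 := modz_ge0 (chi M (delta_mx ord0 i) p) mz.
    have lt := ltz_pmod (chi M (delta_mx ord0 i) p) (d := m%:Z) (ltac:(by rewrite ltz_nat)).
    move: Hw Hi ge0 lt.
    case: (chi M (delta_mx ord0 i) p %% m%:Z)%Z => // r Hw Hi _ lt.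
    apply: (IH r _ _ Hw); first by rewrite -ltz_nat.
    by rewrite lt0n -eqz_nat.
  move=> Hno.
  have Hall : forall i : 'I_n, (chi M (delta_mx ord0 i) p %% m%:Z)%Z = 0.
    by move=> i; apply/eqP/negP=> H; apply: Hno; exists i; apply/negP.
  set c' := \matrix_(i < n, j < 1) ((M *m p^T) i j %/ m%:Z)%Z.
  have Hc : M *m p^T = m%:Z *: c'.
    apply/matrixP=> i j; rewrite ord1 [RHS]mxE [in RHS]mxE -!chi_e.
    by rewrite {1}(divz_eq (chi M (delta_mx ord0 i) p) m%:Z) Hall addr0 mulrC.
  have Hp : p = m%:Z *: (invmx M *m c')^T.
    apply: trmx_inj; rewrite linearZ /= trmxK scalemxAr -Hc.
    by rewrite mulKmx.
  case: (pp _ _ Hp) => [/eqP|/eqP]; last by [].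
  by rewrite eqz_nat => /eqP m1; exists v; rewrite Hv m1.
have [v Hv] : exists v, chi M v p != 0.
  apply: NNPP => H.
  have p0 : p = 0.
    apply: (@chi_nondeg n M p uM) => v; apply/eqP/negP => Hn; apply: H; exists v; exact/negP.
  have := pp 2 0; rewrite p0 scaler0 => /(_ erefl) [] /eqP //.
have [w Hw] : exists w, 0 < chi M w p.
  case: (lerP 0 (chi M v p)) => Hc.
  - by exists v; rewrite lt0r Hv Hc.
  - by exists (- v); rewrite chiNl oppr_gt0.
move: Hw; case Ec: (chi M w p) => [m|m] // Hm.
apply: (key m w Ec); by rewrite -ltz_nat.
Qed.

Theorem mainTheorem4 (n : nat) (M : 'M[int]_n) (p : 'rV[int]_n)
  (S : 'rV[int]_n -> 'rV[int]_n) (f : 'rV[int]_n) :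
  pl_nondegenerate M -> pl_unimodular M -> pl_surface_like M p -> pl_serre_operator M S ->
  rk M p f = 0 -> chi M f f = 1 ->
  (exists k : int, S f - f = k *: p) /\
  (forall k : int, chi M (k *: p) f = 0) /\
  (forall x : 'rV[int]_n, exists! av : int * 'rV[int]_n,
      chi M av.2 f = 0 /\ x = av.1 *: f + av.2) /\
  (forall (a b : int) (v w : 'rV[int]_n), chi M v f = 0 -> chi M w f = 0 ->
      chi M (a *: f + v) (b *: f + w) = bl_chi M (S f - f) (a, v) (b, w)).
Proof.
move=> _ uM [pp pp0 psym psym2] [_ _ _ Ser] rf ff.
rewrite /rk in rf.
have Hu : forall v, chi M v (S f - f) = chi M f v - chi M v f.
  by move=> v; rewrite chiBr -Ser.
have [k Hk] : exists k : int, S f - f = k *: p.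
  have [v0 Hv0] := @exists_one n M p uM pp.
  exists (chi M v0 (S f - f)).
  set k0 := chi M v0 (S f - f).
  apply/eqP; rewrite -subr_eq0; apply/eqP.
  apply: (@chi_nondeg n M _ uM) => v.
  set w := v - chi M v p *: v0.
  have wp : chi M p w = 0 by rewrite psym /w chiBl chiZl Hv0 mulr1 subrr.
  have wu : chi M w (S f - f) = 0 by rewrite Hu (psym2 f w rf wp) subrr.
  rewrite chiBr chiZr.
  move: wu; rewrite /w chiBl chiZl => /eqP; rewrite subr_eq0 => /eqP ->.
  by rewrite mulrC subrr.
have pf : forall k : int, chi M (k *: p) f = 0.
  by move=> k'; rewrite chiZl rf mulr0.
split; first by exists k.
split; first exact: pf.
split.
  move=> x; exists (chi M x f, x - chi M x f *: f); split.
    by split; rewrite /= ?chiBl ?chiZl ?ff ?mulr1 ?subrr // addrC subrK.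
  move=> [b w] /= [Hw ->].
  by rewrite chiDl chiZl ff mulr1 Hw addr0 [b *: f + w]addrC addrK.
move=> a b v w Hv Hw.
have E : chi M f w = chi M (S f) w + chi M (- f) w.
  rewrite -chiDl.
  have -> : chi M f w = chi M w (S f - f) by rewrite chiBr Hw subr0 -Ser.
  by rewrite Hk chiZr chiZl psym.
rewrite /bl_chi /= !chiDl !chiDr !chiZl !chiZr ff Hv mulr1 mulr0 add0r -E.
done.
Qed.
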